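(* Let $(\mathbb{P},\le,f)$ be a forcing property for $\mathcal{L}_A$. For all $p\in\mathbb{P}$ and $\varphi\in\mathcal{L}_A^s(C)$: (1) $F_p(\varphi)\in[0,1]$; (2) if $q\le p$ then $F_q(\varphi)\le F_p(\varphi)$; (3) $F_p(\varphi)+F_p(\neg\varphi)\ge1$.
   Context: $\mathcal{L}$ is a countable continuous signature; formulas of $\mathcal{L}_{\omega_1,\omega}$ are built from atomic formulas using $\neg$, $\tfrac12$, $\dotplus$, countable conjunctions $\bigwedge$ and $\inf_x$. $\mathcal{L}_A$ is a countable fragment, $C=\{c_i:i<\omega\}$ new constants, $\mathcal{L}_A(C)$ the smallest countable fragment of $\mathcal{L}_{\omega_1,\omega}(C)$ containing $\mathcal{L}_A$, $\mathcal{L}_A^s(C)$ its sentences, $\mathcal{L}_A^{as}(C)$ its atomic sentences, $\mathcal{T}(C)$ closed terms. A forcing property $(\mathbb{P},\le,f)$: poset with $f_p\colon\mathcal{L}_A^{as}(C)\to[0,1]$ such that (1) $p\le q\Rightarrow f_p\le f_q$; (2) for every $p$, $\varepsilon>0$, $\tau,\sigma\in\mathcal{T}(C)$, atomic $\varphi(x)$ there are $q\le p$, $c\in C$ with $f_q(d(\tau,c))<\varepsilon$, $f_q(d(\tau,\sigma))<f_p(d(\sigma,\tau))+\varepsilon$, and if $f_p(d(\tau,\sigma))<\delta_{\varphi,x}(\varepsilon)$ then $f_q(\varphi(\sigma))<f_p(\varphi(\tau))+\varepsilon$. $F_p$ on sentences: $F_p(\varphi)=f_p(\varphi)$ for atomic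 $\varphi$; $F_p(\neg\varphi)=1-\inf_{q\le p}F_q(\varphi)$; $F_p(\tfrac12\varphi)=\tfrac12F_p(\varphi)$; $F_p(\varphi\dotplus\psi)=\min(F_p(\varphi)+F_p(\psi),1)$; $F_p(\bigwedge\Phi)=\inf_{\varphi\in\Phi}F_p(\varphi)$; $F_p(\inf_x\varphi)=\inf_{c\in C}F_p(\varphi(c))$. *)

(* Defs.v *)
From HB Require Import structures.
From mathcomp Require Import all_boot all_order all_algebra.
From mathcomp Require Import boolp classical_sets reals.
Set Implicit Arguments. Unset Strict Implicit. Unset Printing Implicit Defensive.
Import Order.TTheory GRing.Theory Num.Theory.
Local Open Scope classical_set_scope.
Local Open Scope ring_scope.

(* A countable signature: function symbols (constants are 0-ary function
   symbols) and relation symbols with arities.  The metric symbol d is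
   built in (atom [adist]). *)
Record signature := Signature {
  Fsym : countType; farity : Fsym -> nat;
  Rsym : countType; rarity : Rsym -> nat }.

Section Syntax.
Local Unset Implicit Arguments.
Variable L : signature.

(* Terms of L(C): variables x_n, new constants c_n (n : nat), applications. *)
Inductive term : Type :=
| tvar of nat
| tcst of nat
| tfun (g : Fsym L) of ('I_(farity g) -> term).

Inductive atom : Type :=
| adist of term & term
| arel (r : Rsym L) of ('I_(rarity r) -> term).

Inductive formula : Type :=
| fatom of atom
| fneg of formula
| fhalf of formula
| fplus of formula & formula
| fconj of (nat -> formula)
| finf of nat & formula.

Fixpoint tfree (x : nat) (t : term) : Prop :=
  match t with
  | tvar n => n = x
  | tcst _ => False
  | tfun _ a => exists i, tfree x (a i)
  end.

Definition tclosed (t : term) : Prop := forall x, ~ tfree x t.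

Definition afree (x : nat) (a : atom) : Prop :=
  match a with
  | adist t1 t2 => tfree x t1 \/ tfree x t2
  | arel _ ts => exists i, tfree x (ts i)
  end.

Definition aclosed (a : atom) : Prop := forall x, ~ afree x a.

Fixpoint ffree (x : nat) (phi : formula) : Prop :=
  match phi with
  | fatom a => afree x a
  | fneg phi => ffree x phi
  | fhalf phi => ffree x phi
  | fplus phi psi => ffree x phi \/ ffree x psi
  | fconj Phi => exists n, ffree x (Phi n)
  | finf y phi => y <> x /\ ffree x phi
  end.

Definition sentence (phi : formula) : Prop := forall x, ~ ffree x phi.

Fixpoint tsubst (s : nat -> term) (t : term) : term :=
  match t with
  | tvar n => s n
  | tcst c => tcst c
  | tfun g a => tfun g (fun i => tsubst s (a i))
  end.

Definition asubst (s : nat -> term) (a : atom) : atom :=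
  match a with
  | adist t1 t2 => adist (tsubst s t1) (tsubst s t2)
  | arel r ts => arel r (fun i => tsubst s (ts i))
  end.

Definition upd (s : nat -> term) (x : nat) (t : term) : nat -> term :=
  fun n => if n == x then t else s n.

End Syntax.

Arguments tvar {L}.
Arguments tfree {L}.
Arguments tclosed {L}.
Arguments afree {L}.
Arguments aclosed {L}.
Arguments ffree {L}.
Arguments sentence {L}.
Arguments tsubst {L}.
Arguments asubst {L}.
Arguments upd {L}.
Arguments fatom {L}.
Arguments fneg {L}.
Arguments fhalf {L}.
Arguments fplus {L}.
Arguments fconj {L}.
Arguments finf {L}.
Arguments adist {L}.

Arguments tcst {L}.
Arguments tfun {L} g _.
Arguments arel {L} r _.

Section Forcing.
Variables (R : realType) (L : signature) (P : Type) (le : P -> P -> Prop)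
  (f : P -> atom L -> R).

(* Forcing property (P, <=, f); [delta a x] is the modulus of uniform
   continuity delta_{phi,x} of the atomic formula phi = a in the variable x. *)
Definition forcing_property (delta : atom L -> nat -> R -> R) : Prop :=
  [/\
      [/\ (forall p, le p p),
          (forall p q, le p q -> le q p -> p = q) &
          (forall p q r, le p q -> le q r -> le p r)],
      (forall p a, aclosed a -> 0 <= f p a <= 1),
      (forall p q a, aclosed a -> le p q -> f p a <= f q a) &
      (forall p (eps : R), 0 < eps ->
       forall tau sigma : term L, tclosed tau -> tclosed sigma ->
       forall (a : atom L) (x : nat), (forall y, afree y a -> y = x) ->
       exists q c, [/\ le q p,
         f q (adist tau (tcst c)) < eps,
         f q (adist tau sigma) < f p (adist sigma tau) + eps &
         (f p (adist tau sigma) < delta a x eps ->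
          f q (asubst (upd tvar x sigma) a)
            < f p (asubst (upd tvar x tau) a) + eps)])].

(* F_p(phi) computed under a substitution s of terms for the variables;
   inf_x phi is handled by substituting each new constant c for x, so that
   Fs s (finf x phi) p = inf_c F_p(phi(c)). *)
Fixpoint Fs (s : nat -> term L) (phi : formula L) (p : P) : R :=
  match phi with
  | fatom a => f p (asubst s a)
  | fneg phi => 1 - inf [set Fs s phi q | q in [set q | le q p]]
  | fhalf phi => Fs s phi p / 2
  | fplus phi psi => Num.min (Fs s phi p + Fs s psi p) 1
  | fconj Phi => inf [set Fs s (Phi n) p | n in [set: nat]]
  | finf x phi => inf [set Fs (upd s x (tcst c)) phi p | c in [set: nat]]
  end.

Definition F (phi : formula L) (p : P) : R := Fs tvar phi p.

End Forcing.

(* Main.v *)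
Require Import Defs.
From HB Require Import structures.
From mathcomp Require Import all_boot all_order all_algebra.
From mathcomp Require Import boolp classical_sets reals.
Import Order.TTheory GRing.Theory Num.Theory.
Local Open Scope ring_scope.

Lemma inf_img (R : realType) (T : Type) (g : T -> R) (A : set T) :
  (exists a, A a) -> (forall a, A a -> 0 <= g a <= 1) ->
  (0 <= inf [set g a | a in A] <= 1) /\
  (forall a, A a -> inf [set g a | a in A] <= g a).
Proof.
move=> [a0 Ha0] Hb.
have lb0 : lbound [set g a | a in A] 0.
  by move=> _ [a Ha <-]; case/andP: (Hb a Ha).
have hl : has_lbound [set g a | a in A] by exists 0.
have H2 : forall a, A a -> inf [set g a | a in A] <= g a.
  by move=> a Ha; apply: (ge_inf hl); exists a.
split=> //; apply/andP; split.
  by apply: lb_le_inf => //; exists (g a0), a0.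
apply: le_trans (H2 _ Ha0) _; by case/andP: (Hb _ Ha0).
Qed.

Lemma aux (R : realType) (L : signature) (P : Type)
  (le : P -> P -> Prop) (f : P -> atom L -> R)
  (delta : atom L -> nat -> R -> R) :
  forcing_property le f delta ->
  forall (phi : formula L) (s : nat -> term L),
    (forall x, ffree x phi -> tclosed (s x)) ->
    forall p, 0 <= Fs le f s phi p <= 1 /\
        (forall q, le q p -> Fs le f s phi q <= Fs le f s phi p).
Proof.
case=> [[lrefl _ ltrans] fb fmon _].
have aclo : forall (a : atom L) s, (forall x, afree x a -> tclosed (s x)) ->
    aclosed (asubst s a).
  have tclo : forall (t : term L) s, (forall x, tfree x t -> tclosed (s x)) ->
      tclosed (tsubst s t).
    elim=> [n|c|g a IH] s Hs x /=.
    - by apply: Hs.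
    - by [].
    - case=> i; apply: (IH i s) => y Hy; apply: Hs; by exists i.
  case=> [t1 t2|r ts] s Hs x /=.
  - case; apply: tclo => y Hy; apply: Hs; by [left|right].
  - case=> i; apply: (tclo (ts i) s) => y Hy; apply: Hs; by exists i.
elim=> [a|phi IH|phi IH|phi IH psi IH'|Phi IH|y phi IH] s Hs p /=.
- split; first by apply: fb; apply: aclo.
  by move=> q hq; apply: fmon => //; apply: aclo.
- have [Hi _] := @inf_img _ _ (fun q => Fs le f s phi q) ([set q | le q p])
     (ex_intro _ p (lrefl p)) (fun q _ => (IH s Hs q).1).
  split; last first.
    move=> q hq.
    have [Hq _] := @inf_img _ _ (fun r => Fs le f s phi r) ([set r | le r q])
     (ex_intro _ q (lrefl q)) (fun r _ => (IH s Hs r).1).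
    rewrite lerD2l lerN2.
    apply: lb_le_inf; first by exists (Fs le f s phi q), q => //; exact: lrefl.
    move=> _ [r Hr <-].
    have [_ H2] := @inf_img _ _ (fun r => Fs le f s phi r) ([set r | le r p])
     (ex_intro _ p (lrefl p)) (fun q _ => (IH s Hs q).1).
    by apply: H2; apply: ltrans Hr hq.
  case/andP: Hi => H0 H1; apply/andP; split; first by rewrite subr_ge0.
  by rewrite lerBlDr lerDl.
- have [/andP[H0 H1] Hm] := IH s Hs p; split.
    apply/andP; split; first by rewrite divr_ge0.
    rewrite ler_pdivrMr // mul1r; apply: le_trans H1 _; by rewrite ler1n.
  by move=> q hq; rewrite ler_pM2r ?invr_gt0 //; apply: Hm.
- have [/andP[H0 H1] Hm] := IH s (fun x h => Hs x (or_introl h)) p.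
  have [/andP[H0' H1'] Hm'] := IH' s (fun x h => Hs x (or_intror h)) p.
  split.
    apply/andP; split; first by rewrite le_min addr_ge0 // ler01.
    by rewrite ge_min lexx orbT.
  move=> q hq; rewrite le_min !ge_min lexx !orbT andbT.
  by rewrite lerD ?Hm ?Hm'.
- have HI : forall r, 0 <= inf [set Fs le f s (Phi n) r | n in [set: nat]] <= 1 /\
     (forall n, inf [set Fs le f s (Phi n) r | n in [set: nat]] <= Fs le f s (Phi n) r).
    move=> r; have [A B] := @inf_img _ _ (fun n => Fs le f s (Phi n) r) ([set: nat])
      (ex_intro _ 0%N I) (fun n _ => (IH n s (fun x h => Hs x (ex_intro _ n h)) r).1).
    by split=> // n; apply: B.
  split; first exact: (HI p).1.
  move=> q hq; apply: lb_le_inf; first by exists (Fs le f s (Phi 0%N) p), 0%N.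
  move=> _ [n _ <-]; apply: le_trans ((HI q).2 n) _.
  by apply: (IH n s (fun x h => Hs x (ex_intro _ n h)) p).2.
- have Hs' : forall c x, ffree x phi -> tclosed (upd s y (tcst c) x).
    move=> c x hx; rewrite /upd; case: eqP => [_|hne].
      by move=> z.
    by apply: Hs; split => // hy; apply: hne.
  have HI : forall r, 0 <= inf [set Fs le f (upd s y (tcst c)) phi r | c in [set: nat]] <= 1 /\
     (forall c, inf [set Fs le f (upd s y (tcst c)) phi r | c in [set: nat]] <= Fs le f (upd s y (tcst c)) phi r).
    move=> r; have [A B] := @inf_img _ _ (fun c => Fs le f (upd s y (tcst c)) phi r) ([set: nat])
      (ex_intro _ 0%N I) (fun c _ => (IH _ (Hs' c) r).1).
    by split=> // n; apply: B.
  split; first exact: (HI p).1.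
  move=> q hq; apply: lb_le_inf; first by exists (Fs le f (upd s y (tcst 0%N)) phi p), 0%N.
  move=> _ [n _ <-]; apply: le_trans ((HI q).2 n) _.
  by apply: (IH _ (Hs' n) p).2.
Qed.

Theorem lemma2p5 (R : realType) (L : signature) (P : Type)
  (le : P -> P -> Prop) (f : P -> atom L -> R)
  (delta : atom L -> nat -> R -> R) :
  forcing_property le f delta ->
  forall (p : P) (phi : formula L), sentence phi ->
    [/\ 0 <= F le f phi p <= 1,
        (forall q, le q p -> F le f phi q <= F le f phi p) &
        1 <= F le f phi p + F le f (fneg phi) p].
Proof.
move=> fp p phi Hphi.
have Hs : forall x, ffree x phi -> tclosed (tvar x : term L).
  by move=> x hx; case: (Hphi x hx).
have [B M] := @aux _ _ _ _ _ _ fp _ _ Hs p.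
have [[lrefl _ _] _ _ _] := fp.
split => //.
rewrite /F /= addrCA lerDl subr_ge0.
have [_ H2] := @inf_img _ _ (fun q => Fs le f tvar phi q) ([set q | le q p])
     (ex_intro _ p (lrefl p)) (fun q _ => (@aux _ _ _ _ _ _ fp _ _ Hs q).1).
exact: H2.
Qed.
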